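(* Let $\Omega\subset\mathbb{R}^d$, let $y:\Omega\to\mathbb{R}^m$ be a forward model, let $\pi(p)$ be a prior probability density on $\Omega$, let $y^m\in\mathbb{R}^m$, and let $\Sigma\in\mathbb{R}^{m\times m}$ be symmetric positive definite. Define $\pi(y^m\mid p)=(2\pi)^{-m/2}\det(\Sigma^2)^{-1/2}\exp(-\tfrac12\|y^m-y(p)\|_{\Sigma^{-2}}^2)$, $\pi(y^m)=\int_\Omega\pi(p)\pi(y^m\mid p)\,dp$, and $\pi(p\mid y^m)=\pi(p)\pi(y^m\mid p)/\pi(y^m)$. Let $\bar y:\Omega\to\mathbb{R}^m$ and $\Gamma:\Omega\to\mathbb{R}^{m\times m}$ (with $\Gamma(p)$ symmetric positive semidefinite) be the surrogate predictive mean and covariance, $L_{\mathcal D}(p)=(2\pi)^{-m/2}\det(\Sigma^2+\Gamma(p))^{-1/2}\exp(-\tfrac12\|y^m-\bar y(p)\|_{(\Sigma^2+\Gamma(p))^{-1}}^2)$, $\pi_{\mathcal D}(y^m)=\int_\Omega\pi(p)L_{\mathcal D}(p)\,dp$, and $\pi(p\mid y^m,\mathcal D)=\pi(p)L_{\mathcal D}(p)/\pi_{\mathcal D}(y^m)$. Assume $\pi_{\mathcal D}(y^m)\le\alpha\,\pi(y^m)$ for some $\alpha<\infty$. Let $\phi(a,b)=\tfrac12a+b\sqrt a$ and $$\psi(y^m,p)=\tfrac12\operatorname{tr}\big(\Sigma^{-2}\Gamma(p)\big)+\phi\Big(\|\bar y(p)-y(p)\|_{\Sigma^{-2}}^2,\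 \|y^m-y(p)\|_{\Sigma^{-2}}\Big)+\log\alpha.$$ Then $$\int_\Omega\pi(p\mid y^m)\,\|y(p)-\bar y(p)\|_2^2\,dp\le\int_\Omega\pi(p\mid y^m,\mathcal D)\,\|y(p)-\bar y(p)\|_2^2\exp\big(\psi(y^m,p)\big)\,dp.$$
   Context: For a symmetric positive definite matrix $M$, $\|x\|_M=\sqrt{x^TMx}$; $\|\cdot\|_2$ is the Euclidean norm. The left-hand side is the posterior-weighted squared $L^2$ distance $\|y-\bar y\|^2_{L^2(\Omega;\pi(\cdot\mid y^m))}$. *)

(* Defs.v *)
From HB Require Import structures.
From mathcomp Require Import all_boot all_order all_algebra.
From mathcomp Require Import all_classical all_reals all_analysis.
Set Implicit Arguments. Unset Strict Implicit. Unset Printing Implicit Defensive.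
Import Order.TTheory GRing.Theory Num.Theory.
Local Open Scope ring_scope.

Definition spd (R : realType) (m : nat) (M : 'M[R]_m) : Prop :=
  M^T = M /\ forall x : 'cV[R]_m, x != 0 -> 0 < (x^T *m M *m x) 0 0.
Definition spsd (R : realType) (m : nat) (M : 'M[R]_m) : Prop :=
  M^T = M /\ forall x : 'cV[R]_m, 0 <= (x^T *m M *m x) 0 0.

Definition mnorm (R : realType) (m : nat) (M : 'M[R]_m) (x : 'cV[R]_m) : R :=
  Num.sqrt ((x^T *m M *m x) 0 0).

Definition norm2 (R : realType) (m : nat) (x : 'cV[R]_m) : R :=
  Num.sqrt (\sum_(i < m) x i 0 ^+ 2).

Definition gauss_lik (R : realType) (m : nat) (C : 'M[R]_m) (z mean : 'cV[R]_m) : R :=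
  powR (2 * pi) (- (m%:R / 2)) * powR (\det C) (- (1 / 2))
  * expR (- (1 / 2) * mnorm (invmx C) (z - mean) ^+ 2).

Definition phi (R : realType) (a b : R) : R := a / 2 + b * Num.sqrt a.

(* Main.v *)
Require Import Defs.
From HB Require Import structures.
From mathcomp Require Import all_boot all_order all_algebra.
From mathcomp Require Import all_classical all_reals all_analysis.
From mathcomp Require Import ring lra.
Import Order.TTheory GRing.Theory Num.Theory.
Set Implicit Arguments. Unset Strict Implicit. Unset Printing Implicit Defensive.
Local Open Scope ring_scope.

Section Mx.
Variable R : rcfType.

Definition qf n (M : 'M[R]_n) (x : 'cV[R]_n) : R := (x^T *m M *m x) 0 0.
Definition bf n (M : 'M[R]_n) (x y : 'cV[R]_n) : R := (x^T *m M *m y) 0 0.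

Lemma mxaddE m n (A B : 'M[R]_(m, n)) i j : (A + B) i j = A i j + B i j.
Proof. by rewrite mxE. Qed.
Lemma mxscaleE m n (A : 'M[R]_(m, n)) a i j : (a *: A) i j = a * A i j.
Proof. by rewrite mxE. Qed.
Lemma mxoppE m n (A : 'M[R]_(m, n)) i j : (- A) i j = - A i j.
Proof. by rewrite mxE. Qed.

Lemma bfC n (M : 'M[R]_n) u w : M^T = M -> bf M w u = bf M u w.
Proof.
move=> sM; rewrite /bf -[in LHS](trmxK (w^T *m M *m u)) mxE.
by rewrite !trmx_mul trmxK sM mulmxA.
Qed.

Lemma qf_expand n (M : 'M[R]_n) u w t : M^T = M ->
  qf M (u + t *: w) = qf M u + 2 * t * bf M u w + t ^+ 2 * qf M w.
Proof.
move=> sM; rewrite /qf [(u + _)^T]raddfD /= [(t *: w)^T]linearZ /= !mulmxDl !mulmxDr.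
rewrite -!scalemxAl -!scalemxAr !mxaddE !mxscaleE -/(bf M u w) -/(bf M w u) bfC //.
rewrite /qf /bf; ring.
Qed.

Lemma disc_le (a b c : R) : 0 <= c -> (forall t, 0 <= a + 2 * t * b + t ^+ 2 * c) -> b ^+ 2 <= a * c.
Proof.
move=> c0' H; have a0 := H 0; rewrite mulr0 mul0r expr0n /= mul0r !addr0 in a0.
have [c0|c0|c0] := ltgtP c 0.
- by move: c0; rewrite ltNge c0'.
- have := H (- b / c).
  have -> : a + 2 * (- b / c) * b + (- b / c) ^+ 2 * c = (a * c - b ^+ 2) / c.
    by field; rewrite gt_eqF.
  by rewrite pmulr_lge0 ?invr_gt0 // subr_ge0.
- subst c; rewrite mulr0.
  have [b0|b0] := eqVneq b 0; first by rewrite b0 expr0n.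
  have := H (- (a + 1) / (2 * b)); rewrite mulr0 addr0.
  have -> : 2 * (- (a + 1) / (2 * b)) * b = - (a + 1) by field; rewrite b0.
  lra.
Qed.

Lemma qf_CS n (M : 'M[R]_n) u w : M^T = M -> (forall x, 0 <= qf M x) ->
  bf M u w ^+ 2 <= qf M u * qf M w.
Proof.
move=> sM pM; apply: disc_le => // t; rewrite -qf_expand //.
Qed.

Lemma qf_tri n (M : 'M[R]_n) u w : M^T = M -> (forall x, 0 <= qf M x) ->
  qf M (u - w) <= qf M u + qf M w + 2 * Num.sqrt (qf M u) * Num.sqrt (qf M w).
Proof.
move=> sM pM; have := qf_expand u w (-1) sM; rewrite scaleN1r => ->.
have h := qf_CS u w sM pM.
have : - bf M u w <= Num.sqrt (qf M u) * Num.sqrt (qf M w).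
  rewrite -sqrtrM ?pM //; apply: le_trans (ler_norm _) _; rewrite normrN.
  by rewrite -sqrtr_sqr ler_sqrt ?mulr_ge0 ?pM.
rewrite sqrrN expr1n; lra.
Qed.

Definition pd n (M : 'M[R]_n) := M^T = M /\ forall x, x != 0 -> 0 < qf M x.

Lemma pd_unit n (M : 'M[R]_n) : (forall x, x != 0 -> 0 < qf M x) -> M \in unitmx.
Proof.
move=> H; rewrite unitmxE unitfE; apply/negP => /det0P [v v0 vM].
have : v^T != 0 by rewrite -[0]trmx0 (inj_eq trmx_inj).
move/H; rewrite /qf trmxK vM mul0mx mxE ltxx //.
Qed.

Lemma qf_inv n (M : 'M[R]_n) x : M^T = M -> M \in unitmx ->
  qf (invmx M) x = qf M (invmx M *m x).
Proof.
move=> sM uM; rewrite /qf trmx_mul trmx_inv sM.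
by rewrite -!mulmxA (mulKVmx uM).
Qed.

Lemma bf_inv n (M : 'M[R]_n) z x : M \in unitmx ->
  bf M z (invmx M *m x) = (z^T *m x) 0 0.
Proof. by move=> uM; rewrite /bf -mulmxA (mulKVmx uM). Qed.

Lemma qf_inv_lb n (M : 'M[R]_n) z x : M^T = M -> M \in unitmx -> (forall y, 0 <= qf M y) ->
  2 * (z^T *m x) 0 0 - qf M z <= qf (invmx M) x.
Proof.
move=> sM uM pM; have := pM (z + (-1) *: (invmx M *m x)).
rewrite qf_expand // bf_inv // -qf_inv //; lra.
Qed.

Lemma qfD n (M N : 'M[R]_n) x : qf (M + N) x = qf M x + qf N x.
Proof. by rewrite /qf mulmxDr mulmxDl mxaddE. Qed.

Lemma qf_loewner n (M G : 'M[R]_n) x : pd M -> G^T = G -> (forall y, 0 <= qf G y) ->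
  qf (invmx (M + G)) x <= qf (invmx M) x.
Proof.
move=> [sM pM] sG pG.
have pMG : forall y, y != 0 -> 0 < qf (M + G) y.
  by move=> y y0; rewrite qfD ltr_wpDr ?pG ?pM.
have uMG := pd_unit pMG; have uM := pd_unit pM.
have sMG : (M + G)^T = M + G by rewrite raddfD /= sM sG.
have pM' : forall y, 0 <= qf M y.
  by move=> y; have [->|y0] := eqVneq y 0; [rewrite /qf mulmx0 mxE|apply/ltW/pM].
set z := invmx (M + G) *m x.
have e1 : qf (invmx (M + G)) x = qf (M + G) z by rewrite qf_inv.
have e2 : (z^T *m x) 0 0 = qf (M + G) z.
  by rewrite /qf /z -mulmxA (mulKVmx uMG).
have := qf_inv_lb z x sM uM pM'.
have := pG z; rewrite qfD in e1 e2; lra.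
Qed.

Lemma qf_delta n (M : 'M[R]_n) i : qf M (delta_mx i 0) = M i i.
Proof.
rewrite /qf trmx_delta -rowE -colE !mxE //.
Qed.

Lemma sc11 (s : R) : (s%:M : 'M[R]_1) 0 0 = s.
Proof. by rewrite mxE. Qed.

Lemma trE m n (A : 'M[R]_(m, n)) i j : A^T i j = A j i.
Proof. by rewrite mxE. Qed.
Lemma mulE m n p (A : 'M[R]_(m, n)) (B : 'M[R]_(n, p)) i j : (A *m B) i j = \sum_k A i k * B k j.
Proof. by rewrite mxE. Qed.

Lemma mx11_mul (P Q : 'M[R]_1) : (P *m Q) 0 0 = P 0 0 * Q 0 0.
Proof. by rewrite mxE big_ord1. Qed.

Lemma qf_block n (A : 'M[R]_1) c b (D : 'M[R]_n) w x :
  qf (block_mx A c b D) (col_mx w x) =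
  (w^T *m A *m w) 0 0 + (w^T *m (c *m x)) 0 0 + (x^T *m b *m w) 0 0 + (x^T *m D *m x) 0 0.
Proof.
rewrite /qf tr_col_mx mul_row_block mul_row_col !mulmxDl !mxaddE !mulmxA.
ring.
Qed.

Lemma hadamard_step n (M : 'M[R]_(1 + n)) :
  (forall S : 'M[R]_n, pd S -> 0 < \det S /\ \det S <= \prod_i S i i) ->
  pd M -> 0 < \det M /\ \det M <= \prod_(i < 1 + n) M i i.
Proof.
move=> IH [sM pM].
set A := ulsubmx M; set c := ursubmx M; set b := dlsubmx M; set D := drsubmx M.
have eM : M = block_mx A c b D by rewrite submxK.
have [sA bc cb sD] : [/\ A^T = A, b^T = c, c^T = b & D^T = D].
  by move: sM; rewrite eM tr_block_mx => /eq_block_mx.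
set a := A 0 0.
have eA : A = a%:M by rewrite [LHS]mx11_scalar.
have Ma : M ord0 ord0 = a.
  rewrite /a /A !mxE; have e : lshift n (0 : 'I_1) = ord0 by apply: val_inj.
  by rewrite e.
have a0 : 0 < a.
  rewrite -Ma -qf_delta; apply: pM; apply/negP => /eqP/matrixP/(_ ord0 0).
  by rewrite !mxE !eqxx /= => /eqP; rewrite oner_eq0.
have an0 : a != 0 by rewrite gt_eqF.
set S := D - b *m (a^-1 *: c).
have eS : M = block_mx 1%:M 0 (a^-1 *: b) 1%:M *m block_mx A c 0 S.
  rewrite mulmx_block !mul1mx !mul0mx !addr0 eA mul_mx_scalar.
  rewrite scalerA mulfV // scale1r /S -scalemxAl -scalemxAr addrC subrK.
  by rewrite eM eA.
have detM : \det M = a * \det S.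
  by rewrite eS det_mulmx det_lblock det_ublock !det1 !mul1r eA det_scalar1.
have sS : S^T = S.
  rewrite /S raddfB /= sD trmx_mul linearZ /= cb bc -scalemxAl -scalemxAr //.
have pS : forall x, x != 0 -> 0 < qf S x.
  move=> x x0; set k := (c *m x) 0 0.
  have kb : (x^T *m b) 0 0 = k.
    by rewrite /k -cb -trmx_mul /trmx mxE.
  have := pM (col_mx (- (a^-1 * k))%:M x).
  rewrite eM qf_block col_mx_eq0 negb_and x0 orbT => /(_ isT).
  rewrite !mx11_mul tr_scalar_mx -/k kb eA !sc11.
  have -> : qf S x = (x^T *m D *m x) 0 0 - a^-1 * k * k.
    rewrite /qf /S mulmxBr mulmxBl mxaddE mxoppE; congr (_ - _).
    rewrite -!scalemxAr -scalemxAl mxscaleE -!mulmxA mulmxA mx11_mul kb -/k; ring.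
  have -> : - (a^-1 * k) * a * - (a^-1 * k) + - (a^-1 * k) * k + k * - (a^-1 * k) +
    (x^T *m D *m x) 0 0 = (x^T *m D *m x) 0 0 - a^-1 * k * k.
    by field.
  by [].
have [dS0 dSle] := IH S (conj sS pS).
split; first by rewrite detM mulr_gt0.
rewrite big_ord_recl detM.
rewrite Ma ler_pM2l //; apply: (le_trans dSle); apply: ler_prod => i _.
have Sii : S i i = D i i - a^-1 * (b i 0) ^+ 2.
  rewrite /S mxaddE mxoppE; congr (_ - _).
  rewrite -scalemxAr mxscaleE -bc mulE big_ord1 trE; ring.
have -> : M (lift ord0 i) (lift ord0 i) = D i i.
  rewrite /D !mxE; have e : rshift 1 i = lift ord0 i by apply: val_inj.
  by rewrite e.
have Spos : 0 < S i i.
  rewrite -qf_delta; apply: pS; apply/negP => /eqP/matrixP/(_ i 0).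
  by rewrite !mxE !eqxx /= => /eqP; rewrite oner_eq0.
rewrite (ltW Spos) /= Sii lerBlDr lerDl mulr_ge0 ?invr_ge0 ?sqr_ge0 ?ltW //.
Qed.

Lemma hadamard n (M : 'M[R]_n) : pd M -> 0 < \det M /\ \det M <= \prod_i M i i.
Proof.
elim: n M => [|n IH] M pM.
  by rewrite det_mx00 big_ord0 ltr01 lexx.
exact: (@hadamard_step n M IH pM).
Qed.

Lemma invmxM' n (A B : 'M[R]_n) : A \in unitmx -> B \in unitmx ->
  invmx (A *m B) = invmx B *m invmx A.
Proof.
move=> uA uB; have uAB : A *m B \in unitmx by rewrite unitmx_mul uA.
transitivity (invmx (A *m B) *m ((A *m B) *m (invmx B *m invmx A))).
  by rewrite [(A *m B) *m _]mulmxA -[(A *m B) *m invmx B]mulmxA (mulmxV uB) mulmx1 (mulmxV uA) mulmx1.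
by rewrite mulmxA (mulVmx uAB) mul1mx.
Qed.

Lemma qf1_pos n (x : 'cV[R]_n) : x != 0 -> 0 < qf 1%:M x.
Proof.
move=> x0; rewrite /qf mulmx1 mulE.
have h : forall k, 0 <= x^T 0 k * x k 0 by move=> k; rewrite trE -expr2 sqr_ge0.
have sg : 0 <= \sum_k x^T 0 k * x k 0 by apply: sumr_ge0 => k _; exact: h.
rewrite lt_def sg andbT.
apply/negP => /eqP s0; move/negP: x0; apply; apply/eqP/matrixP => k j.
rewrite (ord1 j) mxE; have := psumr_eq0P (fun k _ => h k) s0 .
move=> /(_ k isT) /eqP; rewrite trE -expr2 sqrf_eq0 => /eqP -> //.
Qed.

Lemma det_bound n (Sg G : 'M[R]_n) : Sg^T = Sg -> Sg \in unitmx -> G^T = G ->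
  (forall y, 0 <= qf G y) ->
  [/\ 0 < \det (Sg *m Sg), 0 < \det (Sg *m Sg + G),
   \det (Sg *m Sg + G) <= \det (Sg *m Sg) * \prod_i (1 + (invmx Sg *m G *m invmx Sg) i i),
   (forall i, 0 <= (invmx Sg *m G *m invmx Sg) i i) &
   \tr (invmx Sg *m G *m invmx Sg) = \tr (invmx (Sg *m Sg) *m G)].
Proof.
move=> sS uS sG pG; set Si := invmx Sg; set A := Si *m G *m Si.
have sSi : Si^T = Si by rewrite /Si trmx_inv sS.
have qA : forall x, qf A x = qf G (Si *m x).
  by move=> x; rewrite /qf /A trmx_mul sSi !mulmxA.
have Aii : forall i, 0 <= A i i by move=> i; rewrite -qf_delta qA pG.
set N := 1%:M + A.
have eN : Sg *m N *m Sg = Sg *m Sg + G.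
  rewrite /N mulmxDr mulmxDl mulmx1; congr (_ + _).
  by rewrite /A -!mulmxA (mulKVmx uS) (mulVmx uS) mulmx1.
have pN : pd N.
  split; first by rewrite /N raddfD /= trmx1 /A !trmx_mul sSi sG mulmxA.
  by move=> x x0; rewrite /N qfD qA ltr_wpDr ?pG ?qf1_pos.
have [dN0 dNle] := hadamard pN.
have dS : 0 < \det (Sg *m Sg).
  rewrite det_mulmx -expr2 lt_def sqr_ge0 andbT sqrf_eq0.
  by move: uS; rewrite unitmxE unitfE.
have edet : \det (Sg *m Sg + G) = \det (Sg *m Sg) * \det N.
  by rewrite -eN !det_mulmx; ring.
split => //.
- by rewrite edet mulr_gt0.
- rewrite edet ler_pM2l //; apply: (le_trans dNle); apply: ler_prod => i _.
  by rewrite /N mxaddE mxE eqxx mulr1n addrC lexx andbT addr_ge0.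
- by rewrite /A mxtrace_mulC mulmxA (invmxM' uS uS).
Qed.

End Mx.

Lemma pd_psd (R : rcfType) n (M : 'M[R]_n) : pd M -> forall x, 0 <= qf M x.
Proof.
move=> [_ pM] x; have [->|x0] := eqVneq x 0; last exact/ltW/pM.
by rewrite /qf mulmx0 mxE.
Qed.

Lemma powR_pos (R : realType) (a x : R) : 0 < a -> powR a x = expR (x * ln a).
Proof. by move=> a0; rewrite /powR gt_eqF. Qed.

Lemma lik_bound (R : realType) m (Sigma G : 'M[R]_m) (ym y yb : 'cV[R]_m) :
  spd Sigma -> spsd G ->
  gauss_lik (Sigma *m Sigma) ym y <= gauss_lik (Sigma *m Sigma + G) ym yb *
   expR (1 / 2 * \tr (invmx (Sigma *m Sigma) *m G) +
     phi (mnorm (invmx (Sigma *m Sigma)) (yb - y) ^+ 2) (mnorm (invmx (Sigma *m Sigma)) (ym - y))).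
Proof.
move=> [sS pS] [sG pG].
have uS := pd_unit pS.
have pG' : forall y, 0 <= qf G y := pG.
have [d10 d20 dle Aii etr] := det_bound sS uS sG pG'.
set t := \tr (invmx (Sigma *m Sigma) *m G).
have prodle : \prod_i (1 + (invmx Sigma *m G *m invmx Sigma) i i) <= expR t.
  rewrite /t -etr /mxtrace expR_sum; apply: ler_prod => i _.
  by rewrite expR_ge1Dx andbT addr_ge0.
set d1 := \det (Sigma *m Sigma); set d2 := \det (Sigma *m Sigma + G).
have lnle : ln d2 <= ln d1 + t.
  have h : d2 <= d1 * expR t by apply: (le_trans dle); rewrite ler_pM2l.
  rewrite -ler_ln ?posrE ?mulr_gt0 ?expR_gt0 // in h.
  by rewrite lnM ?posrE ?expR_gt0 // expRK in h.
set M1 := Sigma *m Sigma.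
have sM1 : M1^T = M1 by rewrite /M1 trmx_mul sS.
have pM1 : pd M1.
  split => // x x0.
  have -> : qf M1 x = qf 1%:M (Sigma *m x).
    by rewrite /qf /M1 mulmx1 trmx_mul sS !mulmxA.
  apply: qf1_pos; apply/negP => /eqP Sx0; move/negP: x0; apply; apply/eqP.
  by rewrite -(mulKmx uS x) Sx0 mulmx0.
have uM1 := pd_unit pM1.2.
set S2 := invmx M1.
have sS2 : S2^T = S2 by rewrite /S2 trmx_inv sM1.
have pS2 : forall x, 0 <= qf S2 x.
  by move=> x; rewrite /S2 qf_inv // pd_psd.
have loew := qf_loewner (ym - yb) pM1 sG pG'.
have tri := qf_tri (ym - y) (yb - y) sS2 pS2.
have e : (ym - y) - (yb - y) = ym - yb by rewrite opprB addrA subrK.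
rewrite e in tri.
rewrite /gauss_lik /phi /mnorm !sqr_sqrtr ?pS2 //; last first. 
  change (0 <= qf (invmx (M1 + G)) (ym - yb)).
  have uMG : M1 + G \in unitmx.
    by apply: pd_unit => x x0; rewrite qfD ltr_wpDr ?pG' ?pM1.2.
  rewrite qf_inv //; last by rewrite raddfD /= sM1 sG.
  apply: pd_psd; split; first by rewrite raddfD /= sM1 sG.
  by move=> x x0; rewrite qfD ltr_wpDr ?pG' ?pM1.2.
rewrite (@powR_pos _ _ _ d10) (@powR_pos _ _ _ d20).
rewrite -!mulrA; apply: ler_wpM2l; first exact: powR_ge0.
rewrite -!expRD ler_expR.
have q0 := pS2 (ym - y); have c0 := pS2 (yb - y).
have s0 := sqrtr_ge0 (qf S2 (ym - y)); have s1 := sqrtr_ge0 (qf S2 (yb - y)).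
rewrite -/(qf S2 (ym - y)) -/(qf S2 (yb - y)) -/(qf (invmx (M1 + G)) (ym - yb)).
rewrite -/(qf S2 (ym - yb)) in tri loew.
lra.
Qed.

Lemma gl_ge0 (R : realType) m (C : 'M[R]_m) z mean : 0 <= gauss_lik C z mean.
Proof. by rewrite /gauss_lik !mulr_ge0 ?powR_ge0 ?expR_ge0. Qed.

Lemma int_mono d (T : measurableType d) (R : realType) (mu : {measure set T -> \bar R})
  (D : set T) (f g : T -> \bar R) :
  (forall x, D x -> (0 <= f x)%E) -> (forall x, D x -> (f x <= g x)%E) ->
  (\int[mu]_(x in D) f x <= \int[mu]_(x in D) g x)%E.
Proof.
move=> f0 fg.
have g0 : forall x, D x -> (0 <= g x)%E by move=> x Dx; exact: le_trans (f0 x Dx) (fg x Dx).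
rewrite !(integral_mkcond D) (@ge0_integralTE _ _ _ mu _ (erestrict_ge0 f0)).
rewrite (@ge0_integralTE _ _ _ mu _ (erestrict_ge0 g0)).
apply: ge_ereal_sup => _ [h hf <-]; apply: ereal_sup_ubound; exists h => // x.
apply: le_trans (hf x) _; rewrite !patchE; case: ifP => // /set_mem Dx; exact: fg.
Qed.

Unset Implicit Arguments. Set Strict Implicit. Set Printing Implicit Defensive.
Local Open Scope classical_set_scope.

Theorem corollary1 (R : realType) (d : measure_display) (T : measurableType d)
  (mu : {measure set T -> \bar R}) (Omega : set T) (m : nat)
  (y ybar : T -> 'cV[R]_m) (Gamma : T -> 'M[R]_m) (prior : T -> R)
  (ym : 'cV[R]_m) (Sigma : 'M[R]_m) (alpha : R) :
  measurable Omega ->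
  (forall i, measurable_fun Omega (fun p => y p i 0)) ->
  (forall i, measurable_fun Omega (fun p => ybar p i 0)) ->
  (forall i j, measurable_fun Omega (fun p => Gamma p i j)) ->
  measurable_fun Omega prior ->
  (forall p, Omega p -> 0 <= prior p) ->
  (\int[mu]_(p in Omega) (prior p)%:E = 1)%E ->
  spd Sigma ->
  (forall p, Omega p -> spsd (Gamma p)) ->
  let lik := fun p => gauss_lik (Sigma *m Sigma) ym (y p) in
  let evid := (\int[mu]_(p in Omega) (prior p * lik p)%:E)%E in
  let post := fun p => prior p * lik p / fine evid in
  let LD := fun p => gauss_lik (Sigma *m Sigma + Gamma p) ym (ybar p) in
  let evidD := (\int[mu]_(p in Omega) (prior p * LD p)%:E)%E in
  let postD := fun p => prior p * LD p / fine evidD in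
  (0 < evid < +oo)%E ->
  (0 < evidD < +oo)%E ->
  (evidD <= alpha%:E * evid)%E ->
  let S2inv := invmx (Sigma *m Sigma) in
  let psi := fun p => 1 / 2 * \tr (S2inv *m Gamma p)
      + phi (mnorm S2inv (ybar p - y p) ^+ 2) (mnorm S2inv (ym - y p))
      + ln alpha in
  (\int[mu]_(p in Omega) (post p * norm2 (y p - ybar p) ^+ 2)%:E
   <= \int[mu]_(p in Omega)
        (postD p * norm2 (y p - ybar p) ^+ 2 * expR (psi p))%:E)%E.
Proof.
move=> mO my myb mG mpr pr0 pr1 sS pG lik evid post LD evidD postD
  /ssrbool.andP[ev0 evoo] /ssrbool.andP[evD0 evDoo] evle.
cbv zeta beta.
have E0 : 0 < fine evid by apply: fine_gt0; rewrite ev0 evoo.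
have ED0 : 0 < fine evidD by apply: fine_gt0; rewrite evD0 evDoo.
have evfin : evid \is a fin_num by rewrite (ge0_fin_numE (ltW ev0)); exact: evoo.
have evE : evid = (fine evid)%:E by rewrite (fineK evfin).
have evDfin : evidD \is a fin_num by rewrite (ge0_fin_numE (ltW evD0)); exact: evDoo.
have evDE : evidD = (fine evidD)%:E by rewrite (fineK evDfin).
have EDle : fine evidD <= alpha * fine evid.
  by move: evle; rewrite evE evDE -EFinM lee_fin.
rewrite /post /postD; clear post postD; clearbody evid evidD.
move: (fine evid) (fine evidD) E0 ED0 EDle => E ED E0 ED0 EDle.
clear evle evE evDE evfin evDfin ev0 evoo evD0 evDoo.
have al0 : 0 < alpha.
  have h : 0 < alpha * E by exact: lt_le_trans EDle.
  by rewrite -(pmulr_lgt0 _ E0).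
have k : E^-1 <= alpha / ED.
  rewrite -subr_ge0 (_ : alpha / ED - E^-1 = (alpha * E - ED) / (ED * E)).
    by rewrite divr_ge0 ?subr_ge0 // mulr_ge0 // ltW.
  by field; rewrite !gt_eqF.
apply: int_mono => p Op; rewrite lee_fin.
  apply: mulr_ge0; last exact: sqr_ge0.
  apply: divr_ge0; last exact: ltW.
  apply: mulr_ge0; [exact: pr0 | exact: gl_ge0].
have hl := @lik_bound R m Sigma (Gamma p) ym (y p) (ybar p) sS (pG p Op).
rewrite -/(lik p) -/(LD p) in hl.
set X := _ + phi _ _ in hl.
rewrite expRD lnK ?posrE // -/X.
set n := norm2 _ ^+ 2.
have n0 : 0 <= n by rewrite sqr_ge0.
have L0 : 0 <= lik p by exact: gl_ge0.
have U0 : 0 <= LD p * expR X by rewrite mulr_ge0 ?gl_ge0 ?expR_ge0.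
have P0 := pr0 p Op.
apply: (@le_trans _ _ (prior p * n * (LD p * expR X) * (alpha / ED))).
  rewrite (_ : prior p * lik p / E * n = prior p * n * lik p * E^-1); last by ring.
  have pn0 : 0 <= prior p * n by exact: mulr_ge0.
  apply: ler_pM; [exact: mulr_ge0 | by rewrite invr_ge0 ltW | | exact: k].
  by apply: ler_pM; [exact: pn0 | exact: L0 | exact: lexx | exact: hl].
by rewrite le_eqVlt; apply/orP; left; apply/eqP; ring.
Qed.
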